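(* Let $X$ be a finite set with $|X|\ge 2$ and let $\rho:X\times X\to\mathbb{R}_{\geq 0}$ be a function such that $\rho(x,y)=0$ if and only if $x=y$. Let $$KR(\rho)=\mathrm{Conv}\Big\{ e_{x,y}:=\frac{e_x-e_y}{\rho(x,y)} \;\Big|\; x,y\in X,\ x\neq y\Big\}\subset V_0(X).$$ Then $\rho$ is a quasi-metric on $X$ if and only if none of the points $e_{x,y}$ ($x\neq y$) lies in the interior of $KR(\rho)$ (interior taken relative to $V_0(X)$).
   Context: $\{e_x\}_{x\in X}$ is the standard basis of $\mathbb{R}^X$, and $V_0(X)=\{\mu\in\mathbb{R}^X:\sum_{x}\mu(x)=0\}$. A quasi-metric (asymmetric distance function) is a function $\rho:X\times X\to\mathbb{R}_{\ge 0}$ such that $\rho(x,y)=0\iff x=y$ and $\rho(x,z)\le\rho(x,y)+\rho(y,z)$ for all $x,y,z\in X$; symmetry is not required. *)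

(* Defs.v *)
From HB Require Import structures.
From mathcomp Require Import all_boot all_order all_algebra.
Set Implicit Arguments. Unset Strict Implicit. Unset Printing Implicit Defensive.
Import Order.TTheory GRing.Theory Num.Theory.
Local Open Scope ring_scope.

Section Defs.
Variables (R : realFieldType) (X : finType).

Definition ebasis (x : X) : X -> R := fun z => if z == x then 1 else 0.

Definition inV0 (mu : X -> R) : Prop := \sum_(z : X) mu z = 0.

Definition exy (rho : X -> X -> R) (x y : X) : X -> R :=
  fun z => (ebasis x z - ebasis y z) / rho x y.

Definition inKR (rho : X -> X -> R) (p : X -> R) : Prop :=
  exists lam : X -> X -> R,
    (forall x y, 0 <= lam x y) /\
    \sum_(x : X) \sum_(y : X | y != x) lam x y = 1 /\
    (forall z, p z = \sum_(x : X) \sum_(y : X | y != x) lam x y * exy rho x y z).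

(* p lies in the interior of KR(rho) relative to V_0(X)
   (sup-norm ball intersected with V_0; all norms are equivalent) *)
Definition in_rel_interior_KR (rho : X -> X -> R) (p : X -> R) : Prop :=
  exists eps : R, 0 < eps /\
    forall v : X -> R, inV0 v -> (forall z, `|v z| < eps) ->
      inKR rho (fun z => p z + v z).

Definition quasi_metric (rho : X -> X -> R) : Prop :=
  (forall x y, 0 <= rho x y) /\
  (forall x y, rho x y = 0 <-> x = y) /\
  (forall x y z, rho x z <= rho x y + rho y z).

End Defs.

(* Main.v *)
Require Import Defs.
From HB Require Import structures.
From mathcomp Require Import all_boot all_order all_algebra.
From mathcomp Require Import ring lra.
Import Order.TTheory GRing.Theory Num.Theory.
Local Open Scope ring_scope.

Definition inCone (R : realFieldType) (X : finType) (rho : X -> X -> R) (s : R) (p : X -> R) : Prop :=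
  exists lam : X -> X -> R,
    (forall x y, 0 <= lam x y) /\
    \sum_(x : X) \sum_(y : X | y != x) lam x y = s /\
    (forall z, p z = \sum_(x : X) \sum_(y : X | y != x) lam x y * exy rho x y z).

Arguments inCone {R X}.

Lemma cone_ext {R : realFieldType} {X : finType} (rho : X -> X -> R) s (p q : X -> R) :
  (forall z, p z = q z) -> inCone rho s p -> inCone rho s q.
Proof. move=> e [lam [h1 [h2 h3]]]; exists lam; split=> //; split=> // z; by rewrite -e. Qed.

Arguments cone_ext {R X rho s p q}.

Lemma cone_eqs {R : realFieldType} {X : finType} (rho : X -> X -> R) s t (p : X -> R) :
  s = t -> inCone rho s p -> inCone rho t p.
Proof. by move=> ->. Qed.

Arguments cone_eqs {R X rho s t p}.

Lemma cone_add {R : realFieldType} {X : finType} (rho : X -> X -> R) s t (p q : X -> R) :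
  inCone rho s p -> inCone rho t q -> inCone rho (s + t) (fun z => p z + q z).
Proof.
move=> [l1 [a1 [b1 c1]]] [l2 [a2 [b2 c2]]].
exists (fun x y => l1 x y + l2 x y); split; first by move=> x y; rewrite addr_ge0.
split.
  rewrite -b1 -b2 -big_split /=; apply: eq_bigr => x _; by rewrite -big_split.
move=> z; rewrite c1 c2 -big_split /=; apply: eq_bigr => x _; rewrite -big_split /=.
apply: eq_bigr => y _; by rewrite mulrDl.
Qed.

Arguments cone_add {R X rho s t p q}.

Lemma cone_scale {R : realFieldType} {X : finType} (rho : X -> X -> R) s c (p : X -> R) :
  0 <= c -> inCone rho s p -> inCone rho (c * s) (fun z => c * p z).
Proof.
move=> hc [l [a [b e]]]; exists (fun x y => c * l x y); split; first by move=> x y; rewrite mulr_ge0.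
split.
  rewrite -b mulr_sumr; apply: eq_bigr => x _; by rewrite mulr_sumr.
move=> z; rewrite e mulr_sumr; apply: eq_bigr => x _; rewrite mulr_sumr.
apply: eq_bigr => y _; by rewrite mulrA.
Qed.

Arguments cone_scale {R X rho s} c {p}.

Lemma sum_single {R : realFieldType} {X : finType} (a b : X) (G : X -> X -> R) : a != b ->
  \sum_(x : X) \sum_(y : X | y != x) (if (x == a) && (y == b) then 1 else 0) * G x y = G a b.
Proof.
move=> hab; rewrite (bigD1 a) //= [X in _ + X]big1 ?addr0; last first.
  move=> x hx; apply: big1 => y _; by rewrite (negbTE hx) mul0r.
rewrite (bigD1 b) /=; last by rewrite eq_sym.
rewrite !eqxx /= mul1r big1 ?addr0 //.
move=> y /andP [_ hy]; by rewrite (negbTE hy) mul0r.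
Qed.

Lemma cone_basic {R : realFieldType} {X : finType} (rho : X -> X -> R) a b :
  a != b -> inCone rho 1 (exy rho a b).
Proof.
move=> hab; exists (fun x y => if (x == a) && (y == b) then 1 else 0); split.
  by move=> x y; case: ifP.
split.
  rewrite -[X in _ = X](@sum_single R X a b (fun _ _ => (1:R)) hab); apply: eq_bigr => x _.
  apply: eq_bigr => y _; by rewrite mulr1.
by move=> z; rewrite sum_single.
Qed.

Lemma cone_zero {R : realFieldType} {X : finType} (rho : X -> X -> R)
  (hpos : forall a b, a != b -> 0 < rho a b) (hX : (1 < #|X|)%N) s :
  0 <= s -> inCone rho s (fun _ => 0).
Proof.
move=> hs; have /card_gt1P [a [b [_ _ hab]]] := hX.
have hab' : b != a by rewrite eq_sym.
have pab := hpos a b hab; have pba := hpos b a hab'.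
set k := s / (rho a b + rho b a).
have hk : 0 <= k by rewrite divr_ge0 // addr_ge0 // ltW.
have h1 := @cone_scale _ _ rho _ (rho a b * k) _ (mulr_ge0 (ltW pab) hk) (cone_basic rho a b hab).
have h2 := @cone_scale _ _ rho _ (rho b a * k) _ (mulr_ge0 (ltW pba) hk) (cone_basic rho b a hab').
have h := cone_add h1 h2.
apply: (cone_ext _ (cone_eqs _ h)).
  move=> z; rewrite /exy.
  have : rho a b != 0 by rewrite gt_eqF.
  have : rho b a != 0 by rewrite gt_eqF.
  move=> n1 n2; field; by rewrite n1 n2.
rewrite /k; field.
by rewrite gt_eqF // addr_gt0.
Qed.

Lemma cone_mono {R : realFieldType} {X : finType} (rho : X -> X -> R)
  (hpos : forall a b, a != b -> 0 < rho a b) (hX : (1 < #|X|)%N) s t (p : X -> R) :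
  s <= t -> inCone rho s p -> inCone rho t p.
Proof.
move=> hst h.
have h0 : 0 <= t - s by rewrite subr_ge0.
have := cone_add h (cone_zero rho hpos hX (t - s) h0).
move=> h1; apply: (cone_ext _ (cone_eqs _ h1)) => [z|]; first by rewrite addr0.
by rewrite addrC subrK.
Qed.

Lemma cone_sum {R : realFieldType} {X : finType} (rho : X -> X -> R)
  (hpos : forall a b, a != b -> 0 < rho a b) (hX : (1 < #|X|)%N)
  (I : eqType) (r : seq I) (P : pred I) (s : I -> R) (f : I -> X -> R) :
  (forall i, P i -> inCone rho (s i) (f i)) ->
  inCone rho (\sum_(i <- r | P i) s i) (fun z => \sum_(i <- r | P i) f i z).
Proof.
move=> h; elim: r => [|i r IH].
  rewrite big_nil; apply: (cone_ext _ (cone_zero rho hpos hX 0 (lexx 0))) => z.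
  by rewrite big_nil.
rewrite big_cons; case hPi: (P i).
  apply: (cone_ext _ (cone_add (h i hPi) IH)) => z; by rewrite big_cons hPi.
apply: (cone_ext _ IH) => z; by rewrite big_cons hPi.
Qed.

Lemma sum_e {R : realFieldType} {X : finType} (f : X -> R) a :
  \sum_z f z * ebasis R a z = f a.
Proof.
rewrite (bigD1 a) //= /ebasis eqxx mulr1 big1 ?addr0 // => z hz.
by rewrite (negbTE hz) mulr0.
Qed.

Lemma sum_e2 {R : realFieldType} {X : finType} (f : X -> R) z :
  \sum_a f a * ebasis R a z = f z.
Proof.
rewrite (bigD1 z) //= /ebasis eqxx mulr1 big1 ?addr0 // => a ha.
by rewrite eq_sym (negbTE ha) mulr0.
Qed.

Lemma sum_exy {R : realFieldType} {X : finType} (rho : X -> X -> R) (f : X -> R) a b :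
  \sum_z f z * exy rho a b z = (f a - f b) / rho a b.
Proof.
rewrite (eq_bigr (fun z => f z * ebasis R a z / rho a b - f z * ebasis R b z / rho a b)); last first.
  by move=> z _; rewrite /exy mulrBl mulrBr !mulrA.
by rewrite sumrB -!mulr_suml !sum_e mulrBl.
Qed.

Lemma forward (R : realFieldType) (X : finType) (rho : X -> X -> R)
  (hpos : forall a b, a != b -> 0 < rho a b) (hyy : forall y, rho y y = 0)
  (htri : forall x y z, rho x z <= rho x y + rho y z) (x y : X) :
  x <> y -> ~ in_rel_interior_KR rho (exy rho x y).
Proof.
move=> /eqP hxy [eps [heps hint]].
set d := eps / 2.
have hd : 0 < d by rewrite divr_gt0.
set v := fun z => d * (ebasis R x z - ebasis R y z).
have se : forall a : X, \sum_z ebasis R a z = 1.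
  move=> a; rewrite -[RHS](sum_e (fun _ => (1:R)) a); apply: eq_bigr => z _; by rewrite mul1r.
have hv : inV0 v.
  by rewrite /inV0 /v -mulr_sumr sumrB !se subrr mulr0.
have hs : forall z, `|v z| < eps.
  move=> z; have hb : `|ebasis R x z - ebasis R y z| <= 1.
    rewrite /ebasis; do 2 case: (_ == _); by rewrite ?subrr ?subr0 ?sub0r ?normrN ?normr1 ?normr0.
  rewrite /v normrM (ger0_norm (ltW hd)).
  have := ler_piMr (ltW hd) hb; rewrite /d; lra.
have [lam [hl [hsum hp]]] := hint v hv hs.
set phi := fun z => rho z y.
have L : \sum_z phi z * (exy rho x y z + v z) = 1 + d * rho x y.
  rewrite (eq_bigr (fun z => phi z * exy rho x y z + (d * (phi z * ebasis R x z) - d * (phi z * ebasis R y z)))); last first.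
    by move=> z _; rewrite /v; ring.
  rewrite big_split sumrB /= -!mulr_sumr !sum_e sum_exy /phi hyy subr0.
  rewrite divff; last by rewrite gt_eqF // hpos.
  by rewrite mulr0 subr0.
have Rb : \sum_z phi z * (exy rho x y z + v z) <= 1.
  rewrite (eq_bigr (fun z => phi z * \sum_a \sum_(b | b != a) lam a b * exy rho a b z)); last first.
    by move=> z _; rewrite hp.
  have -> : \sum_z phi z * (\sum_a \sum_(b | b != a) lam a b * exy rho a b z)
     = \sum_a \sum_(b | b != a) lam a b * \sum_z phi z * exy rho a b z.
    under eq_bigr => z _ do rewrite mulr_sumr.
    rewrite exchange_big; apply: eq_bigr => a _.
    under eq_bigr => z _ do rewrite mulr_sumr.
    rewrite exchange_big; apply: eq_bigr => b _.
    rewrite mulr_sumr; apply: eq_bigr => z _; by rewrite mulrCA.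
  rewrite -hsum; apply: ler_sum => a _; apply: ler_sum => b hb.
  rewrite sum_exy; apply: ler_piMr => //.
  have hab := hpos a b (ltac:(by rewrite eq_sym)).
  rewrite ler_pdivrMr // mul1r /phi.
  have := htri a b y; lra.
have : 0 < d * rho x y by rewrite mulr_gt0 // hpos.
lra.
Qed.

Lemma interior_of_violation (R : realFieldType) (X : finType) (rho : X -> X -> R)
  (hnn : forall a b, 0 <= rho a b)
  (hpos : forall a b, a != b -> 0 < rho a b) (hX : (1 < #|X|)%N) (x y z : X) :
  x != y -> y != z -> x != z -> rho x y + rho y z < rho x z ->
  in_rel_interior_KR rho (exy rho x z).
Proof.
move=> hxy hyz hxz hlt.
have pxy := hpos _ _ hxy; have pyz := hpos _ _ hyz; have pxz := hpos _ _ hxz.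
have nxy : rho x y != 0 by rewrite gt_eqF.
have nyz : rho y z != 0 by rewrite gt_eqF.
have nxz : rho x z != 0 by rewrite gt_eqF.
set t := (rho x y + rho y z) / rho x z.
have ht : t < 1 by rewrite /t ltr_pdivrMr // mul1r.
set K := \sum_a (rho a x + rho x a).
have hK : 0 <= K by rewrite /K sumr_ge0 // => a _; rewrite addr_ge0.
have nK : K + 1 != 0 by rewrite gt_eqF // ltr_wpDl.
set eps := (1 - t) / (K + 1).
have heps : 0 < eps by rewrite /eps divr_gt0 ?subr_gt0 // ltr_wpDl.
exists eps; split => // v hv hsmall.
have h1 : inCone rho t (exy rho x z).
  have a1 := cone_scale (rho x y / rho x z) (divr_ge0 (hnn _ _) (hnn _ _)) (cone_basic rho x y hxy).
  have a2 := cone_scale (rho y z / rho x z) (divr_ge0 (hnn _ _) (hnn _ _)) (cone_basic rho y z hyz).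
  apply: (cone_ext _ (cone_eqs _ (cone_add a1 a2))) => [w|].
    rewrite /exy; field; by rewrite nxy nyz nxz.
  rewrite /t; field; by rewrite nxz.
have h2 : inCone rho (\sum_a `|v a| * (rho a x + rho x a)) v.
  have H : forall a, xpredT a -> inCone rho (`|v a| * (rho a x + rho x a))
               (fun w => v a * (ebasis R a w - ebasis R x w)).
    move=> a _; case: (eqVneq a x) => [->|hax].
      apply: (cone_ext _ (cone_zero rho hpos hX _ (mulr_ge0 (normr_ge0 _) (addr_ge0 (hnn _ _) (hnn _ _))))) => w.
      by rewrite subrr mulr0.
    have nax : rho a x != 0 by rewrite gt_eqF // hpos.
    have hxa : x != a by rewrite eq_sym.
    have nxa : rho x a != 0 by rewrite gt_eqF // hpos.
    case: (lerP 0 (v a)) => hva.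
      apply: (cone_mono rho hpos hX (v a * rho a x * 1) _ _ _
        (cone_ext _ (cone_scale (v a * rho a x) (mulr_ge0 hva (hnn _ _)) (cone_basic rho a x hax)))).
        rewrite (ger0_norm hva) mulr1; have := hnn x a; have := hnn a x; nra.
      move=> w; rewrite /exy; field; by rewrite nax.
    have hva' : 0 <= - v a by rewrite oppr_ge0 ltW.
    apply: (cone_mono rho hpos hX (- v a * rho x a * 1) _ _ _
      (cone_ext _ (cone_scale (- v a * rho x a) (mulr_ge0 hva' (hnn _ _)) (cone_basic rho x a hxa)))).
      rewrite (ltr0_norm hva) mulr1; have := hnn x a; have := hnn a x; nra.
    move=> w; rewrite /exy; field; by rewrite nxa.
  have hh := cone_sum rho hpos hX X (index_enum X) xpredT _ _ H.
  apply: (cone_ext _ hh) => w.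
  rewrite (eq_bigr (fun a => v a * ebasis R a w - v a * ebasis R x w)); last first.
    by move=> a _; rewrite mulrBr.
  by rewrite sumrB sum_e2 -mulr_suml hv mul0r subr0.
have h3 : t + \sum_a `|v a| * (rho a x + rho x a) <= 1.
  have b1 : \sum_a `|v a| * (rho a x + rho x a) <= eps * K.
    rewrite /K mulr_sumr; apply: ler_sum => a _; apply: ler_wpM2r.
      by rewrite addr_ge0.
    exact: ltW (hsmall a).
  have b2 : eps * K <= eps * (K + 1) by apply: ler_wpM2l; [exact: ltW heps | rewrite lerDl].
  have b3 : eps * (K + 1) = 1 - t by rewrite /eps divfK.
  lra.
exact: (cone_mono rho hpos hX _ _ _ h3 (cone_add h1 h2)).
Qed.

Theorem mainTheorem1 (R : realFieldType) (X : finType) (rho : X -> X -> R)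
  (hX : (1 < #|X|)%N)
  (hnonneg : forall x y, 0 <= rho x y)
  (hzero : forall x y, rho x y = 0 <-> x = y) :
  quasi_metric rho <->
  (forall x y : X, x <> y -> ~ in_rel_interior_KR rho (exy rho x y)).
Proof.
have hpos : forall a b, a != b -> 0 < rho a b.
  move=> a b hab; rewrite lt_def hnonneg andbT; apply/eqP => /hzero /eqP.
  by rewrite (negbTE hab).
have hyy : forall y, rho y y = 0 by move=> y; apply/hzero.
split.
  move=> [_ [_ htri]]; exact: forward hpos hyy htri.
move=> H; split => //; split => // x y z.
rewrite leNgt; apply/negP => hlt.
have hxz : x != z.
  apply/eqP => exz; move: hlt; rewrite exz hyy.
  have := hnonneg z y; have := hnonneg y z; lra.
have hxy : x != y.
  apply/eqP => exy'; move: hlt; rewrite exy' hyy add0r ltxx //.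
have hyz : y != z.
  apply/eqP => eyz; move: hlt; rewrite eyz hyy addr0 ltxx //.
have hxz' : x <> z by apply/eqP.
apply: (H x z hxz').
exact: interior_of_violation hnonneg hpos hX x y z hxy hyz hxz hlt.
Qed.
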